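(* Let $k$ be a field of characteristic $0$ and let $F(X,Y), G(X,Y)\in k[X,Y]$ have total degree at most $n$ and satisfy $\det\begin{pmatrix}\partial F/\partial X & \partial F/\partial Y\\ \partial G/\partial X & \partial G/\partial Y\end{pmatrix}\in k^*$. Let $\mathcal{U}(t)=X+\sum_{i\ge1}u_i(X,Y)t^i$ and $\mathcal{V}(t)=Y+\sum_{i\ge1}v_i(X,Y)t^i$ (with $u_i,v_i\in k[X,Y]$) be the unique solution in $k[X,Y][[t]]$ of the system $$F(\mathcal{U}(t),\mathcal{V}(t))=tX+(1-t)F(X,Y),\qquad G(\mathcal{U}(t),\mathcal{V}(t))=tY+(1-t)G(X,Y),\qquad \mathcal{U}(0)=X,\ \mathcal{V}(0)=Y.$$ Let $\phi,\tau:k[X,Y]\to k[X,Y]$ be the $k$-algebra morphisms determined by $\phi(X)=F(X,Y)$, $\phi(Y)=G(X,Y)$, $\tau(X)=X+\sum_{i=1}^n u_i(X,Y)$, $\tau(Y)=Y+\sum_{i=1}^n v_i(X,Y)$. Then $\phi$ has a polynomial inverse (i.e. is an automorphism of $k[X,Y]$) if and only if $\phi\circ\tau=\mathrm{id}_{k[X,Y]}=\tau\circ\phi$.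
   Context: The existence and uniqueness of the power series solution $(\mathcal{U}(t),\mathcal{V}(t))$ under the Jacobian hypothesis is part of the setting (it holds). $k^*$ denotes the nonzero elements of $k$. *)

(* Defs.v *)
From HB Require Import structures.
From mathcomp Require Import all_boot all_order all_algebra.
From mathcomp Require Import mpoly.
Set Implicit Arguments. Unset Strict Implicit. Unset Printing Implicit Defensive.
Import Order.TTheory GRing.Theory.
Local Open Scope ring_scope.

(* k[X,Y] is {mpoly k[2]}; X = 'X_(var0), Y = 'X_(var1).
   k[X,Y][[t]] truncations are represented in {poly {mpoly k[2]}} (t = 'X). *)

Definition var0 : 'I_2 := @Ordinal 2 0 isT.
Definition var1 : 'I_2 := @Ordinal 2 1 isT.

Section Defs.
Variable k : fieldType.

Definition XX : {mpoly k[2]} := 'X_var0.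
Definition YY : {mpoly k[2]} := 'X_var1.

Definition jacobian (F G : {mpoly k[2]}) : {mpoly k[2]} :=
  F^`M(var0) * G^`M(var1) - F^`M(var1) * G^`M(var0).

Definition evalT (F : {mpoly k[2]}) (A B : {poly {mpoly k[2]}}) :
  {poly {mpoly k[2]}} :=
  mmap (fun c : k => (c%:MP)%:P) (tnth [tuple A; B]) F.

Definition trunc (x : {mpoly k[2]}) (w : nat -> {mpoly k[2]}) (m : nat) :
  {poly {mpoly k[2]}} :=
  x%:P + \sum_(1 <= i < m.+1) (w i)%:P * 'X^i.

Definition subst2 (A B : {mpoly k[2]}) (P : {mpoly k[2]}) : {mpoly k[2]} :=
  P \mPo [tuple A; B].

Definition is_automorphism (A B : {mpoly k[2]}) : Prop :=
  exists C D : {mpoly k[2]},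
    (forall P, subst2 A B (subst2 C D P) = P) /\
    (forall P, subst2 C D (subst2 A B P) = P).

End Defs.

(* Main.v *)
Set Warnings "-notation-overridden,-ambiguous-paths,-notation-incompatible-prefix,-deprecated".
Require Import Defs.
From HB Require Import structures.
From mathcomp Require Import all_boot all_order all_algebra.
From mathcomp Require Import mpoly.
From mathcomp Require Import ring zify.
Import Order.TTheory GRing.Theory.
Local Open Scope ring_scope.
Set Implicit Arguments. Unset Strict Implicit. Unset Printing Implicit Defensive.

Section Gen.
Variable k : fieldType.
Implicit Types (p : {mpoly k[2]}).

Lemma mmap_ext (S : comRingType) (f1 f2 : k -> S) (g1 g2 : 'I_2 -> S) p :
  f1 =1 f2 -> g1 =1 g2 -> mmap f1 g1 p = mmap f2 g2 p.
Proof.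
move=> E1 E2; rewrite /mmap; apply: eq_bigr => m _.
by rewrite E1 (mmap1_eq _ E2).
Qed.

Lemma rmorph_mmap (S T : comRingType) (th : {rmorphism S -> T})
   (f : k -> S) (g : 'I_2 -> S) p :
  th (mmap f g p) = mmap (th \o f) (th \o g) p.
Proof.
rewrite /mmap rmorph_sum; apply: eq_bigr => m _.
rewrite rmorphM /mmap1 rmorph_prod; congr (_ * _).
by apply: eq_bigr => i _; rewrite rmorphXn.
Qed.

Lemma mmap_comp (S : comRingType) (f : {rmorphism k -> S}) (g : 'I_2 -> S) p
   (lq : 2.-tuple {mpoly k[2]}) :
  mmap f g (p \mPo lq) = mmap f (fun i => mmap f g (tnth lq i)) p.
Proof.
rewrite /comp_mpoly (rmorph_mmap (mmap f g)).
by apply: mmap_ext => // c /=; rewrite mmapC.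
Qed.

Lemma mmap_XX (S : comRingType) (f : {rmorphism k -> S}) (g : 'I_2 -> S) :
  mmap f g (XX k) = g var0.
Proof. by rewrite /XX mmapX mmap1U. Qed.

Lemma mmap_YY (S : comRingType) (f : {rmorphism k -> S}) (g : 'I_2 -> S) :
  mmap f g (YY k) = g var1.
Proof. by rewrite /YY mmapX mmap1U. Qed.

Definition mult (S : comRingType) (e x : S) := exists q, x = q * e.

Lemma mult0 (S : comRingType) (e : S) : mult e 0.
Proof. by exists 0; rewrite mul0r. Qed.

Lemma multD (S : comRingType) (e x y : S) : mult e x -> mult e y -> mult e (x + y).
Proof. by move=> [a ->] [b ->]; exists (a + b); rewrite mulrDl. Qed.

Lemma multMl (S : comRingType) (e x y : S) : mult e y -> mult e (x * y).
Proof. by move=> [b ->]; exists (x * b); rewrite mulrA. Qed.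

Lemma multMr (S : comRingType) (e x y : S) : mult e x -> mult e (x * y).
Proof. by move=> [b ->]; exists (b * y); rewrite mulrAC. Qed.

Lemma mult_prod (S : comRingType) (e x1 x2 y1 y2 : S) :
  mult e (x1 - x2) -> mult e (y1 - y2) -> mult e (x1 * y1 - x2 * y2).
Proof.
move=> h1 h2; have -> : x1 * y1 - x2 * y2 = x1 * (y1 - y2) + (x1 - x2) * y2 by ring.
by apply: multD; [apply: multMl | apply: multMr].
Qed.

Lemma mult_exp (S : comRingType) (e x y : S) m :
  mult e (x - y) -> mult e (x ^+ m - y ^+ m).
Proof.
move=> h; elim: m => [|m IH]; first by rewrite !expr0 subrr; apply: mult0.
by rewrite !exprS; apply: mult_prod.
Qed.

Lemma ev_cong (S : comRingType) (f : k -> S) (A B A' B' e : S) p :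
  mult e (A - A') -> mult e (B - B') ->
  mult e (mmap f (tnth [tuple A; B]) p - mmap f (tnth [tuple A'; B']) p).
Proof.
move=> hA hB; rewrite /mmap -sumrB.
apply: (big_ind (mult e)); [exact: mult0 | by move=> x y; apply: multD|].
move=> m _; rewrite -mulrBr; apply: multMl.
rewrite /mmap1.
apply: (big_ind2 (fun x y => mult e (x - y))); first by rewrite subrr; apply: mult0.
  by move=> x1 x2 y1 y2; apply: mult_prod.
move=> i _; apply: mult_exp.
by case: i => [[|[|//]]] Hi /=; rewrite /tnth /=.
Qed.

End Gen.
Lemma size_mul_bnd (K : fieldType) (x y : {poly K}) a b :
  (size x <= a.+1)%N -> (size y <= b.+1)%N -> (size (x * y)%R <= (a + b).+1)%N.
Proof.
move=> hx hy; apply: leq_trans (size_mul_leq _ _) _.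
have := leq_add hx hy; lia.
Qed.

Lemma size_ev (k K : fieldType) (f : k -> {poly K}) (A B : {poly K}) (p : {mpoly k[2]}) s :
 (forall c, size (f c) <= 1)%N -> (size A <= s.+1)%N -> (size B <= s.+1)%N ->
 (size (mmap f (tnth [tuple A;B]) p) <= ((msize p).-1 * s).+1)%N.
Proof.
move=> hf hA hB; rewrite /mmap big_seq.
elim/big_ind: _.
- by rewrite size_poly0.
- by move=> x y hx hy; apply: leq_trans (size_add _ _) _; rewrite geq_max hx hy.
move=> m hm.
have hdeg : (mdeg m <= (msize p).-1)%N.
  by have := msize_mdeg_lt hm; case: (msize p).
have -> : ((msize p).-1 * s = 0 + (msize p).-1 * s)%N by [].
apply: size_mul_bnd; first exact: hf.
rewrite /mmap1 big_ord_recr big_ord1 /=.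
set i0 := widen_ord _ ord0.
have -> : tnth [tuple A; B] i0 = A by [].
have -> : tnth [tuple A; B] ord_max = B by [].
apply: leq_trans (size_mul_bnd (a := s * m i0) (b := s * m ord_max) _ _) _.
- apply: leq_trans (size_poly_exp_leq _ _) _; rewrite ltnS.
  by apply: leq_mul => //; case: (size A) hA.
- apply: leq_trans (size_poly_exp_leq _ _) _; rewrite ltnS.
  by apply: leq_mul => //; case: (size B) hB.
rewrite ltnS -mulnDr mulnC; apply: leq_mul => //.
apply: leq_trans hdeg; rewrite mdegE big_ord_recr big_ord1 /=.
done.
Qed.
Section Dim.
Variable K : fieldType.
Implicit Types (d p q a b : {poly K}).

Lemma mult_modp d p q : d != 0 -> mult d (p - q) -> p %% d = q %% d.
Proof.
move=> dn0 [c hc]; apply/esym/(@modpP _ _ (c + q %/ d)); last by rewrite ltn_modp.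
have -> : p = (p - q) + q by rewrite subrK.
by rewrite hc mulrDl -addrA -divp_eq.
Qed.

Lemma mult_comp d p a b : mult d (a - b) -> mult d ((p \Po a) - (p \Po b)).
Proof.
move=> h; rewrite !comp_polyE -sumrB.
apply: (big_ind (mult d)); [exact: mult0 | by move=> x y; apply: multD|].
by move=> i _; rewrite -scalerBr -mul_polyC; apply: multMl; apply: mult_exp.
Qed.

Lemma comp_wide p q N : (size p <= N)%N -> p \Po q = \sum_(i < N) p`_i *: q ^+ i.
Proof.
move=> hs; rewrite comp_polyE (big_ord_widen N (fun i => p`_i *: q ^+ i) hs).
rewrite big_mkcond; apply: eq_bigr => i _; case: ifP => // /negbT.
by rewrite -leqNgt => h; rewrite nth_default // scale0r.
Qed.

Lemma modp_sum d I (r : seq I) (F : I -> {poly K}) :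
  (\sum_(i <- r) F i) %% d = \sum_(i <- r) (F i %% d).
Proof.
by elim/big_rec2: _ => [|i y1 y2 _ <-]; rewrite ?mod0p // modpD.
Qed.

Lemma dimlemma d rho sigma g : (1 < size d)%N -> g != 0 ->
  mult d (g \Po rho) -> mult d ('X - (sigma \Po rho)) -> (size d <= size g)%N.
Proof.
move=> hd gn0 hg hs.
have dn0 : d != 0 by rewrite -size_poly_eq0 -lt0n (ltn_trans _ hd).
set D := (size d).-1; set N := (size g).-1.
pose M := \matrix_(i < N) (poly_rV ((rho ^+ i) %% d) : 'rV[K]_D).
have key : forall r : {poly K}, (size r <= N)%N -> poly_rV ((r \Po rho) %% d) = poly_rV r *m M.
  move=> r hr; rewrite (comp_wide _ hr) modp_sum linear_sum mulmx_sum_row.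
  apply: eq_bigr => i _; rewrite modpZl linearZ rowK; congr (_ *: _).
  by rewrite mxE.
have sub1 : ((1%:M : 'M[K]_D) <= M)%MS.
  apply/row_subP => j; rewrite row1.
  pose r := ('X^j \Po sigma) %% g.
  have hr : (size r <= N)%N by rewrite /N -ltnS prednK ?ltn_modp // lt0n size_poly_eq0.
  have -> : 'e_j = poly_rV ('X^j %% d) :> 'rV[K]_D.
    rewrite modp_small; last by rewrite size_polyXn -(prednK (ltn_trans (ltn0Sn 0) hd)) ltnS ltn_ord.
    by apply/rowP => l; rewrite !mxE coefXn eqxx /= -val_eqE.
  rewrite (@mult_modp d _ (r \Po rho) dn0); first by rewrite key //; exact: submxMl.
  have -> : 'X^j - (r \Po rho) = (('X^j \Po 'X) - ('X^j \Po (sigma \Po rho)))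
      + ((('X^j \Po sigma) \Po rho) - (r \Po rho)).
    by rewrite comp_polyXr comp_polyA addrA subrK.
  apply: multD; first exact: mult_comp.
  rewrite {1}(divp_eq ('X^j \Po sigma) g) comp_polyD comp_polyM -/r addrK.
  exact: multMl.
have := mxrankS sub1; rewrite mxrank1 => h1.
have h2 := leq_trans h1 (rank_leq_row M).
have hg0 : (0 < size g)%N by rewrite lt0n size_poly_eq0.
move: h2; rewrite /D /N; case: (size d) hd => // sd _; case: (size g) hg0 => // sg _.
Qed.


Lemma multN (e x : {poly K}) : mult e x -> mult e (- x).
Proof. by move=> [a ->]; exists (- a); rewrite mulNr. Qed.

Lemma size_sub_const (p : {poly K}) (b : K) n :
  (size p <= n.+1)%N -> (size (p - b%:P)%R <= n.+1)%N.
Proof.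
move=> hp; apply: leq_trans (size_add _ _) _; rewrite geq_max hp size_opp.
by apply: leq_trans (size_polyC_leq1 _) _.
Qed.

Lemma size_mulC_le (p : {poly K}) (b : K) : (size (p * b%:P)%R <= size p)%N.
Proof. by rewrite mulrC mul_polyC size_scale_leq. Qed.

Lemma core (h rho Fc Gc : {poly K}) (b1 b2 w1 w2 c : K) n :
  mult (h - c%:P) ((Fc \Po rho) - (b1%:P + 'X * w1%:P)) ->
  mult (h - c%:P) ((Gc \Po rho) - (b2%:P + 'X * w2%:P)) ->
  (w1 != 0) || (w2 != 0) ->
  (forall sigma, Fc = b1%:P + sigma * w1%:P -> Gc = b2%:P + sigma * w2%:P ->
      h \Po sigma = c%:P /\ rho \Po sigma = 'X) ->
  (size Fc <= n.+1)%N -> (size Gc <= n.+1)%N -> (size h <= n.+1)%N.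
Proof.
case: (leqP (size h) 1) => [h1|h2]; first by move=> *; exact: leq_trans h1 _.
wlog w1n0 : Fc Gc b1 b2 w1 w2 / w1 != 0.
  move=> W H1 H2 Hw H4 S1 S2; case/orP: Hw => Hw; first by apply: (W Fc Gc b1 b2 w1 w2) => //; rewrite Hw.
  apply: (W Gc Fc b2 b1 w2 w1) => //; first by rewrite Hw.
  by move=> s e1 e2; apply: H4.
move=> H1 H2 _ H4 S1 S2.
pose sigma := (Fc - b1%:P) * (w1^-1)%:P.
pose g := (Fc - b1%:P) * w2%:P - (Gc - b2%:P) * w1%:P.
have hw : w1%:P * (w1^-1)%:P = 1 :> {poly K} by rewrite -polyCM mulfV.
have eF : Fc = b1%:P + sigma * w1%:P.
  by rewrite /sigma -mulrA [_ * w1%:P]mulrC hw mulr1 addrC subrK.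
case: (eqVneq g 0) => [g0 | gn0].
  have eG : Gc = b2%:P + sigma * w2%:P.
    move/eqP: g0; rewrite subr_eq0 => /eqP e.
    have : Gc - b2%:P = sigma * w2%:P.
      by rewrite -[LHS]mulr1 -hw mulrA -e /sigma; ring.
    by move <-; rewrite addrC subrK.
  have [hs rs] := H4 sigma eF eG.
  have ss : (1 < size sigma)%N.
    rewrite ltnNge; apply/negP => /size1_polyC es.
    by move: rs; rewrite es comp_polyCr => e; have := size_polyX K; rewrite -e size_polyC; case: (_ != 0).
  have := size_comp_poly h sigma; rewrite hs size_polyC.
  case: (size h) h2 => // [[|sh]] // _; case: (size sigma) ss => // [[|ss']] // _.
  by case: (c != 0).
have sd : size (h - c%:P) = size h.
  rewrite size_addl // size_opp; apply: leq_ltn_trans h2.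
  exact: size_polyC_leq1.
have hd : (1 < size (h - c%:P)%R)%N by rewrite sd.
have Hg : mult (h - c%:P) (g \Po rho).
  have -> : g \Po rho = ((Fc \Po rho) - (b1%:P + 'X * w1%:P)) * w2%:P
                     - ((Gc \Po rho) - (b2%:P + 'X * w2%:P)) * w1%:P.
    by rewrite /g !comp_polyB !comp_polyM !comp_polyB !comp_polyC; ring.
  by apply: multD; [apply: multMr | apply: multN; apply: multMr].
have Hs : mult (h - c%:P) ('X - (sigma \Po rho)).
  have -> : 'X - (sigma \Po rho) = - (((Fc \Po rho) - (b1%:P + 'X * w1%:P)) * (w1^-1)%:P).
    rewrite /sigma comp_polyM comp_polyB !comp_polyC.
    rewrite -{1}['X]mulr1 -hw; ring.
  by apply: multN; apply: multMr.
have := dimlemma hd gn0 Hg Hs; rewrite sd => le; apply: leq_trans le _.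
rewrite /g; apply: leq_trans (size_add _ _) _; rewrite geq_max size_opp.
by rewrite !(leq_trans (size_mulC_le _ _)) // size_sub_const.
Qed.

End Dim.

Section KLevel.
Variables (k K : fieldType) (f : {rmorphism k -> {poly K}}).
Hypothesis hf : forall c, (size (f c) <= 1)%N.

Definition evK (p : {mpoly k[2]}) (A B : {poly K}) := mmap f (tnth [tuple A; B]) p.

Lemma evK_comp p (A B : {mpoly k[2]}) U V :
  evK (p \mPo [tuple A; B]) U V = evK p (evK A U V) (evK B U V).
Proof.
rewrite /evK mmap_comp; apply: mmap_ext => // i.
by case: i => [[|[|//]]] Hi; rewrite /tnth /=.
Qed.

Lemma evK_XX U V : evK (XX k) U V = U.
Proof. by rewrite /evK mmap_XX. Qed.

Lemma evK_YY U V : evK (YY k) U V = V.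
Proof. by rewrite /evK mmap_YY. Qed.

Lemma fconst c : f c = ((f c)`_0)%:P.
Proof. exact: size1_polyC. Qed.

Lemma evK_Po p U V s : (evK p U V) \Po s = evK p (U \Po s) (V \Po s).
Proof.
rewrite /evK (rmorph_mmap (comp_poly s)); apply: mmap_ext => [c|i] /=.
  by rewrite fconst comp_polyC.
by case: i => [[|[|//]]] Hi; rewrite /tnth /=.
Qed.

Lemma evK_size p (U V : {poly K}) n :
  (msize p <= n.+1)%N -> (size U <= 2)%N -> (size V <= 2)%N -> (size (evK p U V) <= n.+1)%N.
Proof.
move=> hp hU hV; apply: leq_trans (size_ev _ hf hU hV) _.
by rewrite muln1; case: (msize p) hp.
Qed.


Lemma auto_deg (F G C D : {mpoly k[2]}) n (b1 b2 w1 w2 : K) :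
  C \mPo [tuple F; G] = XX k -> D \mPo [tuple F; G] = YY k ->
  F \mPo [tuple C; D] = XX k -> G \mPo [tuple C; D] = YY k ->
  (msize F <= n.+1)%N -> (msize G <= n.+1)%N ->
  (size (evK C (b1%:P + 'X * w1%:P) (b2%:P + 'X * w2%:P)) <= n.+1)%N /\
  (size (evK D (b1%:P + 'X * w1%:P) (b2%:P + 'X * w2%:P)) <= n.+1)%N.
Proof.
move=> eC eD eF eG sF sG.
set L1 := b1%:P + 'X * w1%:P; set L2 := b2%:P + 'X * w2%:P.
have [/andP[/eqP w10 /eqP w20]|wn0] := boolP ((w1 == 0) && (w2 == 0)).
  have e1 : L1 = b1%:P by rewrite /L1 w10 mulr0 addr0.
  have e2 : L2 = b2%:P by rewrite /L2 w20 mulr0 addr0.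
  rewrite e1 e2; split; apply: leq_trans (size_ev _ hf (s := 0) _ _) _;
    rewrite ?muln0 ?size_polyC_leq1 //.
have wn0' : (w1 != 0) || (w2 != 0) by move: wn0; rewrite negb_and.
have sL1 : (size L1 <= 2)%N.
  rewrite /L1; apply: leq_trans (size_add _ _) _; rewrite geq_max.
  rewrite (leq_trans (size_polyC_leq1 _)) //= mulrC mul_polyC.
  by apply: leq_trans (size_scale_leq _ _) _; rewrite size_polyX.
have sL2 : (size L2 <= 2)%N.
  rewrite /L2; apply: leq_trans (size_add _ _) _; rewrite geq_max.
  rewrite (leq_trans (size_polyC_leq1 _)) //= mulrC mul_polyC.
  by apply: leq_trans (size_scale_leq _ _) _; rewrite size_polyX.
set h := evK C L1 L2; set rho := evK D L1 L2.
have eFh : evK F h rho = L1 by rewrite -evK_comp eF evK_XX.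
have eGh : evK G h rho = L2 by rewrite -evK_comp eG evK_YY.
have sc : (size (0 : K)%:P <= 2)%N by rewrite size_polyC eqxx.
have sX : (size ('X : {poly K}) <= 2)%N by rewrite size_polyX.
have Le1 : forall sigma : {poly K}, L1 \Po sigma = b1%:P + sigma * w1%:P.
  by move=> sigma; rewrite /L1 comp_polyD comp_polyM !comp_polyC comp_polyX.
have Le2 : forall sigma : {poly K}, L2 \Po sigma = b2%:P + sigma * w2%:P.
  by move=> sigma; rewrite /L2 comp_polyD comp_polyM !comp_polyC comp_polyX.
split.
- apply: (@core K h rho (evK F (0 : K)%:P 'X) (evK G (0 : K)%:P 'X) b1 b2 w1 w2 0 n).
  + rewrite evK_Po comp_polyC comp_polyX -/L1 -eFh -[X in mult _ X]opprB; apply: multN.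
    by apply: ev_cong; [exists 1; rewrite mul1r | exists 0; rewrite subrr mul0r].
  + rewrite evK_Po comp_polyC comp_polyX -/L2 -eGh -[X in mult _ X]opprB; apply: multN.
    by apply: ev_cong; [exists 1; rewrite mul1r | exists 0; rewrite subrr mul0r].
  + exact: wn0'.
  + move=> sigma E1 E2; rewrite /h /rho !evK_Po Le1 Le2 -E1 -E2 -!evK_comp eC eD.
    by rewrite evK_XX evK_YY.
  + exact: evK_size.
  + exact: evK_size.
- apply: (@core K rho h (evK F 'X (0 : K)%:P) (evK G 'X (0 : K)%:P) b1 b2 w1 w2 0 n).
  + rewrite evK_Po comp_polyC comp_polyX -/L1 -eFh -[X in mult _ X]opprB; apply: multN.
    by apply: ev_cong; [exists 0; rewrite subrr mul0r | exists 1; rewrite mul1r].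
  + rewrite evK_Po comp_polyC comp_polyX -/L2 -eGh -[X in mult _ X]opprB; apply: multN.
    by apply: ev_cong; [exists 0; rewrite subrr mul0r | exists 1; rewrite mul1r].
  + exact: wn0'.
  + move=> sigma E1 E2; rewrite /h /rho !evK_Po Le1 Le2 -E1 -E2 -!evK_comp eC eD.
    by rewrite evK_XX evK_YY.
  + exact: evK_size.
  + exact: evK_size.
Qed.

End KLevel.

Lemma horner_lin_gen (S : comNzRingType) (a b : S) : ('X * a%:P + (1 - 'X) * b%:P).[1] = a.
Proof.
by rewrite -polyC1 hornerD !hornerM hornerD hornerN !hornerX !hornerC subrr mul0r addr0 mul1r.
Qed.

Definition truncG (S : nzRingType) (x : S) (w : nat -> S) m : {poly S} :=
  x%:P + \sum_(1 <= i < m.+1) (w i)%:P * 'X^i.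

Lemma truncG_coef (S : nzRingType) (x : S) (w : nat -> S) m :
  (truncG x w m)`_m = if m == 0%N then x else w m.
Proof.
rewrite /truncG coefD coefC coef_sum.
case: m => [|m] /=; first by rewrite big_geq // addr0.
rewrite add0r big_nat_recr //= coefCM coefXn eqxx mulr1 big_nat_cond big1 ?add0r //.
move=> i /andP[/andP[_ hi] _]; rewrite coefCM coefXn.
by rewrite eq_sym (ltn_eqF hi) mulr0.
Qed.

Lemma tau_sum_gen (S : nzRingType) (x : S) (w : nat -> S) (h : {poly S}) n :
  (forall m j, (j <= m)%N -> (truncG x w m)`_j = h`_j) -> (size h <= n.+1)%N ->
  x + \sum_(1 <= i < n.+1) w i = h.[1].
Proof.
move=> H sh; rewrite (horner_coef_wide _ sh).
rewrite big_ord_recl expr1n mulr1 -(H 0%N 0%N) // truncG_coef /=.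
congr (_ + _); rewrite big_add1 /= big_mkord; apply: eq_bigr => i _.
by rewrite expr1n mulr1 -(H i.+1 i.+1) // truncG_coef.
Qed.

Lemma map_lin (S T : comNzRingType) (phi : {rmorphism S -> T}) (a b : S) :
  map_poly phi ('X * a%:P + (1 - 'X) * b%:P) = (phi b)%:P + 'X * (phi a - phi b)%:P.
Proof.
rewrite rmorphD !rmorphM rmorphB rmorph1 /= map_polyX !map_polyC polyCB; ring.
Qed.

Section Top.
Variable k : fieldType.
Local Notation R := {mpoly k[2]}.
Local Notation K := {fraction R}.

Definition fT : {rmorphism k -> {poly R}} := polyC \o (@mpolyC 2 k).

Lemma evalTE (p : R) A B : evalT p A B = mmap fT (tnth [tuple A; B]) p.
Proof. by []. Qed.

Lemma evalT_comp p (A B : R) U V :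
  evalT (p \mPo [tuple A; B]) U V = evalT p (evalT A U V) (evalT B U V).
Proof.
rewrite !evalTE mmap_comp; apply: mmap_ext => // i.
by case: i => [[|[|//]]] Hi; rewrite /tnth /=.
Qed.

Lemma evalT_XX U V : evalT (XX k) U V = U.
Proof. by rewrite evalTE mmap_XX. Qed.

Lemma evalT_YY U V : evalT (YY k) U V = V.
Proof. by rewrite evalTE mmap_YY. Qed.

Lemma mult_Xn (p : {poly R}) m :
  (forall j, (j <= m)%N -> p`_j = 0) -> mult ('X^(m.+1)) p.
Proof.
move=> hp; exists (\poly_(i < size p) p`_(i + m.+1)).
apply/polyP => i; rewrite coefMXn coef_poly.
case: ltnP => [hi|hi]; first by rewrite hp // -ltnS.
case: ltnP => hs; first by rewrite subnK.
by rewrite nth_default // (leq_trans hs) // leq_subr.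
Qed.

Lemma mult_Xn_coef (p : {poly R}) m j : mult ('X^(m.+1)) p -> (j <= m)%N -> p`_j = 0.
Proof. by move=> [q ->] hj; rewrite coefMXn ltnS hj. Qed.

Lemma tupXY : forall i, tnth [tuple (XX k); (YY k)] i = 'X_i.
Proof.
move=> i; case: i => [[|[|//]]] Hi; rewrite /tnth /XX /YY.
  (have -> : var0 = Ordinal Hi by apply: val_inj).
  done.
(have -> : var1 = Ordinal Hi by apply: val_inj).
done.
Qed.

Lemma EP (P : R) : P = mmap (@mpolyC 2 k) (tnth [tuple (XX k); (YY k)]) P.
Proof.
rewrite -{1}(comp_mpoly_id P) /comp_mpoly.
(apply: mmap_ext => // i).
by rewrite tnth_map tnth_ord_tuple tupXY.
Qed.

Lemma tnth2_0 (T : Type) (A B : T) (H : (0 < 2)%N) : tnth [tuple A; B] (Ordinal H) = A.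
Proof. by []. Qed.
Lemma tnth2_1 (T : Type) (A B : T) (H : (1 < 2)%N) : tnth [tuple A; B] (Ordinal H) = B.
Proof. by []. Qed.

Lemma hornerev (p : {poly R}) : (horner_eval (1 : R) : {rmorphism {poly R} -> R}) p = p.[1].
Proof. by []. Qed.

Lemma horner_lin (a b : R) : ('X * a%:P + (1 - 'X) * b%:P).[1] = a.
Proof. exact: horner_lin_gen. Qed.

Lemma horner1_evalT (P F G : R) :
  (evalT P ('X * (XX k)%:P + (1 - 'X) * F%:P) ('X * (YY k)%:P + (1 - 'X) * G%:P)).[1] = P.
Proof.
rewrite -horner_evalE evalTE (rmorph_mmap (horner_eval 1)).
rewrite [RHS]EP; apply: mmap_ext => [c|i].
  rewrite /comp; change ((fT c).[1] = c%:MP).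
  by rewrite /fT /comp hornerC.
rewrite /comp; case: i => [[|[|//]]] Hi; rewrite ?tnth2_0 ?tnth2_1 hornerev; exact: horner_lin.
Qed.

Lemma deg_top (F G C D : R) n :
  C \mPo [tuple F; G] = XX k -> D \mPo [tuple F; G] = YY k ->
  F \mPo [tuple C; D] = XX k -> G \mPo [tuple C; D] = YY k ->
  (msize F <= n.+1)%N -> (msize G <= n.+1)%N ->
  (size (evalT C ('X * (XX k)%:P + (1 - 'X) * F%:P) ('X * (YY k)%:P + (1 - 'X) * G%:P)) <= n.+1)%N /\
  (size (evalT D ('X * (XX k)%:P + (1 - 'X) * F%:P) ('X * (YY k)%:P + (1 - 'X) * G%:P)) <= n.+1)%N.
Proof.
move=> eC eD eF eG sF sG.
pose th : {rmorphism {poly R} -> {poly K}} := map_poly (@tofrac R).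
have tinj : injective (@tofrac R) by move=> x y /eqP; rewrite tofrac_eq => /eqP.
have sz : forall p, size (th p) = size p.
  by move=> p; rewrite /th size_map_inj_poly // tofrac0.
pose fK : {rmorphism k -> {poly K}} := th \o fT.
have hf : forall c, (size (fK c) <= 1)%N.
  by move=> c; rewrite /fK /comp sz /fT /comp size_polyC leq_b1.
have eT : forall p, th (evalT p ('X * (XX k)%:P + (1 - 'X) * F%:P) ('X * (YY k)%:P + (1 - 'X) * G%:P))
   = evK fK p ((tofrac F)%:P + 'X * (tofrac (XX k) - tofrac F)%:P)
              ((tofrac G)%:P + 'X * (tofrac (YY k) - tofrac G)%:P).
  move=> p; rewrite evalTE (rmorph_mmap th) /evK; apply: mmap_ext => // i.
  case: i => [[|[|//]]] Hi; rewrite /comp ?tnth2_0 ?tnth2_1; exact: map_lin.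
have [h1 h2] := auto_deg hf (tofrac F) (tofrac G) (tofrac (XX k) - tofrac F) (tofrac (YY k) - tofrac G) eC eD eF eG sF sG.
split; [rewrite -sz eT; exact: h1 | rewrite -sz eT; exact: h2].
Qed.

End Top.

Lemma key_lemma (k : fieldType) (F G P Z : {mpoly k[2]}) (u v : nat -> {mpoly k[2]}) :
  (forall m j : nat, (j <= m)%N ->
     (evalT F (trunc (XX k) u m) (trunc (YY k) v m))`_j
       = ('X * (XX k)%:P + (1 - 'X) * F%:P)`_j) ->
  (forall m j : nat, (j <= m)%N ->
     (evalT G (trunc (XX k) u m) (trunc (YY k) v m))`_j
       = ('X * (YY k)%:P + (1 - 'X) * G%:P)`_j) ->
  P \mPo [tuple F; G] = Z ->
  forall m j, (j <= m)%N ->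
  (evalT Z (trunc (XX k) u m) (trunc (YY k) v m))`_j =
  (evalT P ('X * (XX k)%:P + (1 - 'X) * F%:P) ('X * (YY k)%:P + (1 - 'X) * G%:P))`_j.
Proof.
move=> HF HG eP m j hj.
have m1 := mult_Xn (fun i hi => etrans (coefB _ _ i) (etrans (congr1 (fun x => x - _) (HF m i hi)) (subrr _))).
have m2 := mult_Xn (fun i hi => etrans (coefB _ _ i) (etrans (congr1 (fun x => x - _) (HG m i hi)) (subrr _))).
have := ev_cong (fT k) P m1 m2.
rewrite -!evalTE -evalT_comp eP => /mult_Xn_coef /(_ hj).
by rewrite coefB => /eqP; rewrite subr_eq0 => /eqP.
Qed.

Unset Implicit Arguments.

Theorem corollary3p3 (k : fieldType) (n : nat) (F G : {mpoly k[2]})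
    (u v : nat -> {mpoly k[2]}) :
  [pchar k] =i pred0 ->
  (msize F <= n.+1)%N -> (msize G <= n.+1)%N ->
  (exists c : k, c != 0 /\ jacobian F G = c%:MP) ->
  (forall m j : nat, (j <= m)%N ->
     (evalT F (trunc (XX k) u m) (trunc (YY k) v m))`_j
       = ('X * (XX k)%:P + (1 - 'X) * F%:P)`_j) ->
  (forall m j : nat, (j <= m)%N ->
     (evalT G (trunc (XX k) u m) (trunc (YY k) v m))`_j
       = ('X * (YY k)%:P + (1 - 'X) * G%:P)`_j) ->
  let tauX := XX k + \sum_(1 <= i < n.+1) u i in
  let tauY := YY k + \sum_(1 <= i < n.+1) v i in
  is_automorphism F G <->
    ((forall P, subst2 F G (subst2 tauX tauY P) = P) /\
     (forall P, subst2 tauX tauY (subst2 F G P) = P)).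
Proof.
move=> _ sF sG _ HF HG tauX tauY; split; last first.
  by move=> [h1 h2]; exists tauX, tauY.
case=> C [D [h1 h2]].
have sXX : forall A B : {mpoly k[2]}, XX k \mPo [tuple A; B] = A.
  by move=> A B; rewrite /XX comp_mpolyXU.
have sYY : forall A B : {mpoly k[2]}, YY k \mPo [tuple A; B] = B.
  by move=> A B; rewrite /YY comp_mpolyXU.
have eC : C \mPo [tuple F; G] = XX k.
  by have := h1 (XX k); rewrite /subst2 sXX.
have eD : D \mPo [tuple F; G] = YY k.
  by have := h1 (YY k); rewrite /subst2 sYY.
have eF : F \mPo [tuple C; D] = XX k.
  by have := h2 (XX k); rewrite /subst2 sXX.
have eG : G \mPo [tuple C; D] = YY k.
  by have := h2 (YY k); rewrite /subst2 sYY.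
have [dC dD] := deg_top eC eD eF eG sF sG.
have tX : tauX = C.
  rewrite /tauX -[RHS](horner1_evalT C F G).
  apply: (tau_sum_gen _ dC) => m j hj.
  have := key_lemma HF HG eC hj; rewrite evalT_XX => <-.
  by [].
have tY : tauY = D.
  rewrite /tauY -[RHS](horner1_evalT D F G).
  apply: (tau_sum_gen _ dD) => m j hj.
  have := key_lemma HF HG eD hj; rewrite evalT_YY => <-.
  by [].
by rewrite tX tY; split.
Qed.
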